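(* For $n>2$ and a fixed pair $i<j$ in $\{1,\dots,n\}$, the map $w^{\mathcal{P}}_{\{i,j\}}\colon G_{n,\mathcal{P}}^2\to F_n^2$ defined below is well defined, i.e. its value on a word does not change when the relations of $G_{n,\mathcal{P}}^2$ are applied to the word.
   Context: $G_{n,\mathcal{P}}^2$ has generators $a_{kl}^{\epsilon}$ ($\{k,l\}\subset\{1,\dots,n\}$, $\epsilon\in\{0,1\}$, with $a^\epsilon_{kl}=a^\epsilon_{lk}$) and relations $(a_{kl}^\epsilon)^2=1$; $a_{kl}^{\epsilon}a_{st}^{\epsilon'}=a_{st}^{\epsilon'}a_{kl}^{\epsilon}$ for $\{k,l\}\cap\{s,t\}=\emptyset$; $a_{kl}^{\epsilon_{kl}}a_{ks}^{\epsilon_{ks}}a_{ls}^{\epsilon_{ls}}=a_{ls}^{\epsilon_{ls}}a_{ks}^{\epsilon_{ks}}a_{kl}^{\epsilon_{kl}}$ for distinct $k,l,s$ with $\epsilon_{kl}+\epsilon_{ks}+\epsilon_{ls}\equiv0\pmod2$. Let $F_n^2$ be the group generated by all maps $\sigma\colon\{1,\dots,n\}\setminus\{i,j\}\to\mathbb{Z}_2$ subject only to the relations $\sigma^2=1$ (a free product of copies of $\mathbb{Z}_2$). For a word $\beta$ in the generators of $G_{n,\mathcal{P}}^2$, each occurrence $c=a_{ij}^{\epsilon}$ of a letter with index pair $\{i,j\}$, and each $k\in\{1,\dots,n\}\setminus\{i,j\}$, put $i^{\mathcal{P}}_c(k)=N^0_{ik}+N^0_{jk}\bmod 2$ if $\epsilon=0$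 and $i^{\mathcal{P}}_c(k)=N^0_{ik}+N^1_{jk}\bmod 2$ if $\epsilon=1$, where $N^{\delta}_{st}$ is the number of occurrences of $a^{\delta}_{st}$ in $\beta$ before $c$. If $c_1,\dots,c_m$ are the occurrences of letters $a_{ij}^{\epsilon}$ (any $\epsilon$) in $\beta$ in order, set $w^{\mathcal{P}}_{\{i,j\}}(\beta)=i^{\mathcal{P}}_{c_1}\cdots i^{\mathcal{P}}_{c_m}\in F_n^2$. *)

(* Defs.v *)
From mathcomp Require Import all_boot.
Set Implicit Arguments. Unset Strict Implicit. Unset Printing Implicit Defensive.

(* Indices {1,...,n} are represented by 'I_n = {0,...,n-1}.
   A letter a^e_{kl} is a triple ((k,l),e); canonical letters have k < l,
   which encodes the identification a^e_{kl} = a^e_{lk}. *)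
Definition letter (n : nat) := ('I_n * 'I_n * bool)%type.

Definition ltr n (k l : 'I_n) (e : bool) : letter n :=
  if k < l then ((k, l), e) else ((l, k), e).

Definition wf_letter n (x : letter n) : bool := x.1.1 < x.1.2.

Inductive Grel n : seq (letter n) -> seq (letter n) -> Prop :=
| Grel_inv (k l : 'I_n) (e : bool) : k != l ->
    Grel [:: ltr k l e; ltr k l e] [::]
| Grel_comm (k l s t : 'I_n) (e e' : bool) : uniq [:: k; l; s; t] ->
    Grel [:: ltr k l e; ltr s t e'] [:: ltr s t e'; ltr k l e]
| Grel_tetra (k l s : 'I_n) (ekl eks els : bool) : uniq [:: k; l; s] ->
    ~~ (ekl (+) eks (+) els) ->
    Grel [:: ltr k l ekl; ltr k s eks; ltr l s els]
         [:: ltr l s els; ltr k s eks; ltr k l ekl].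

(* Equality in the group presented by the relations rel on words:
   the congruence (equivalence closure of rewriting inside a context). *)
Inductive pres_eq (T : Type) (rel : seq T -> seq T -> Prop) :
    seq T -> seq T -> Prop :=
| pres_step u v a b : rel a b -> pres_eq rel (u ++ a ++ v) (u ++ b ++ v)
| pres_refl w : pres_eq rel w w
| pres_sym w1 w2 : pres_eq rel w1 w2 -> pres_eq rel w2 w1
| pres_trans w1 w2 w3 :
    pres_eq rel w1 w2 -> pres_eq rel w2 w3 -> pres_eq rel w1 w3.

Definition Geq n : seq (letter n) -> seq (letter n) -> Prop := pres_eq (@Grel n).

(* Generators of F^2_n: maps sigma : {1..n} \ {i,j} -> Z_2 *)
Definition Fgen n (i j : 'I_n) :=
  {ffun {k : 'I_n | (k != i) && (k != j)} -> bool}.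

Inductive Frel (T : Type) : seq T -> seq T -> Prop :=
| Frel_inv (x : T) : Frel [:: x; x] [::].

Definition Feq n (i j : 'I_n) : seq (Fgen i j) -> seq (Fgen i j) -> Prop :=
  pres_eq (@Frel (Fgen i j)).

Definition Ncount n (pre : seq (letter n)) (s t : 'I_n) (d : bool) : nat :=
  count (pred1 (ltr s t d)) pre.

Definition iP n (i j : 'I_n) (pre : seq (letter n)) (e : bool) : Fgen i j :=
  [ffun k => odd (Ncount pre i (val k) false + Ncount pre j (val k) e)].

Fixpoint wP_aux n (i j : 'I_n) (pre beta : seq (letter n)) : seq (Fgen i j) :=
  match beta with
  | [::] => [::]
  | x :: beta' =>
      (if (x.1.1 == i) && (x.1.2 == j) then [:: iP i j pre x.2] else [::])
        ++ wP_aux i j (rcons pre x) beta'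
  end.

Definition wP n (i j : 'I_n) (beta : seq (letter n)) : seq (Fgen i j) :=
  wP_aux i j [::] beta.

(* Main.v *)
Require Import Defs.
From mathcomp Require Import all_boot.
From mathcomp Require Import zify.

Set Implicit Arguments. Unset Strict Implicit. Unset Printing Implicit Defensive.
Arguments ltr : simpl never.

Lemma ltr_eq n (a b c d : 'I_n) e f : (ltr a b e == ltr c d f) =
  (e == f) && (((a == c) && (b == d)) || ((a == d) && (b == c))).
Proof.
rewrite /ltr -!val_eqE /=.
case: ifP => H1; case: ifP => H2; rewrite !xpair_eqE -!val_eqE /=;
 case: e; case: f => //=; rewrite ?andbT ?andbF //; lia.
Qed.

Lemma isij_ltr n (i j a b : 'I_n) e : i < j ->
  (((ltr a b e).1.1 == i) && ((ltr a b e).1.2 == j)) =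
  ((a == i) && (b == j)) || ((a == j) && (b == i)).
Proof.
move=> Hij; rewrite /ltr; case: ifP => H /=; rewrite -!val_eqE /=; lia.
Qed.

Lemma iP_rcons n (i j : 'I_n) pre y e :
  iP i j (rcons pre y) e =
  [ffun m => iP i j pre e m (+) (y == ltr i (val m) false) (+) (y == ltr j (val m) e)].
Proof.
apply/ffunP => m; rewrite !ffunE /Ncount -cats1 !count_cat /= !addn0 !oddD.
by case: (y == ltr i _ _); case: (y == ltr j _ _); case: (odd (count_mem _ _)); case: (odd (count_mem _ _)).
Qed.

Lemma ltr2 n (k l : 'I_n) e : (ltr k l e).2 = e.
Proof. by rewrite /ltr; case: ifP. Qed.

Lemma iP_rcons_pt n (i j : 'I_n) pre y e x :
  iP i j (rcons pre y) e x =
  iP i j pre e x (+) (y == ltr i (val x) false) (+) (y == ltr j (val x) e).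
Proof. by rewrite iP_rcons ffunE. Qed.

Definition peq n (p1 p2 : seq (letter n)) :=
  forall x, odd (count (pred1 x) p1) = odd (count (pred1 x) p2).

Lemma peq_rcons n (p1 p2 : seq (letter n)) y : peq p1 p2 -> peq (rcons p1 y) (rcons p2 y).
Proof. by move=> H x; rewrite -!cats1 !count_cat !oddD H. Qed.

Lemma iP_peq n (i j : 'I_n) p1 p2 e : peq p1 p2 -> iP i j p1 e = iP i j p2 e.
Proof. by move=> H; apply/ffunP => m; rewrite !ffunE /Ncount !oddD !H. Qed.

Lemma wP_aux_peq n (i j : 'I_n) b : forall p1 p2, peq p1 p2 -> wP_aux i j p1 b = wP_aux i j p2 b.
Proof.
elim: b => [|x b IH] p1 p2 H //=.
by rewrite (iP_peq _ _ _ H) (IH _ _ (peq_rcons _ H)).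
Qed.

Lemma wP_aux_cat n (i j : 'I_n) a : forall pre b,
  wP_aux i j pre (a ++ b) = wP_aux i j pre a ++ wP_aux i j (pre ++ a) b.
Proof.
elim: a => [|x a IH] pre b /=; first by rewrite cats0.
by rewrite IH catA cat_rcons.
Qed.

Lemma pres_ctx T (rel : seq T -> seq T -> Prop) w1 w2 p q :
  pres_eq rel w1 w2 -> pres_eq rel (p ++ w1 ++ q) (p ++ w2 ++ q).
Proof.
elim => [u v a b H| w | w1' w2' _ IH | w1' w2' w3' _ IH1 _ IH2].
- by have := pres_step (p ++ u) (v ++ q) H; rewrite -!catA.
- exact: pres_refl.
- exact: pres_sym.
- exact: pres_trans IH2.
Qed.

Lemma Feq_inv2 n (i j : 'I_n) (F G : Fgen i j) : F = G -> Feq [:: F; G] [::].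
Proof.
move=> ->; have := @pres_step _ (@Frel (Fgen i j)) [::] [::] _ _ (Frel_inv G).
by [].
Qed.

Ltac bf := repeat (match goal with
 | |- context[?a == ?b] =>
     is_var a; is_var b;
     let H := fresh "Hne" in let H' := fresh "Hne'" in
     case: (eqVneq a b) => [?|H]; [subst| have H' : (b == a) = false; [by rewrite eq_sym (negbTE H)|
       rewrite ?(negbTE H) ?H'; clear H']]
 end; rewrite ?eqxx ?ltnn ?inE /=).

Ltac contra := match goal with
  | H : is_true (?x < ?x) |- _ => by rewrite ltnn in H
  | H : is_true (?x != ?x) |- _ => by rewrite eqxx in H
  | H : is_true false |- _ => by []
  end.

Ltac genb := repeat match goal with
  | |- context[@fun_of_fin ?A ?B ?P (@iP ?n ?i ?j ?p ?e) ?x] => move: (@fun_of_fin A B P (@iP n i j p e) x)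
  end.

Ltac casebools := intros; repeat match goal with b : bool |- _ => destruct b end;
  rewrite /= ?andbF ?andbT ?orbF ?orbT ?addbF ?addbT ?negbK.

Ltac ffleaf := apply/ffunP; case; let m := fresh "m" in let H := fresh "Hm" in
   intros m H; rewrite ?iP_rcons_pt; genb; rewrite /= ?ltr_eq; revert H; bf;
   casebools; try contra; try done.

Lemma core_inv n (i j : 'I_n) pre k l e : i < j -> k != l ->
  Feq (wP_aux i j pre [:: ltr k l e; ltr k l e]) [::].
Proof.
move=> Hij Hkl; rewrite /= !isij_ltr // ?ltr2; move: Hij Hkl; bf; move=> *.
all: try contra.
all: try apply: pres_refl.
all: apply: Feq_inv2; symmetry; ffleaf.
Qed.

Lemma core_comm n (i j : 'I_n) pre k l s t e e' : i < j -> uniq [:: k; l; s; t] ->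
  wP_aux i j pre [:: ltr k l e; ltr s t e'] = wP_aux i j pre [:: ltr s t e'; ltr k l e].
Proof.
move=> Hij Hu; rewrite /= !isij_ltr // ?ltr2; move: Hij Hu; rewrite /= ?inE; bf; move=> *.
all: try contra.
all: try done.
all: congr [:: _]; ffleaf.
Qed.

Lemma core_tetra n (i j : 'I_n) pre k l s ekl eks els : i < j -> uniq [:: k; l; s] ->
  ~~ (ekl (+) eks (+) els) ->
  wP_aux i j pre [:: ltr k l ekl; ltr k s eks; ltr l s els] =
  wP_aux i j pre [:: ltr l s els; ltr k s eks; ltr k l ekl].
Proof.
move=> Hij Hu Hp; rewrite /= !isij_ltr // ?ltr2; move: Hij Hu Hp; rewrite /= ?inE; bf; move=> *.
all: try contra.
all: try done.
all: congr [:: _]; ffleaf.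
Qed.

Lemma rel_core n (i j : 'I_n) pre a b : i < j -> Grel a b ->
  Feq (wP_aux i j pre a) (wP_aux i j pre b) /\ peq (pre ++ a) (pre ++ b).
Proof.
move=> Hij; case.
- move=> k l e Hkl; split; first exact: core_inv.
  by move=> x; rewrite !count_cat /= addn0 !oddD addbb addbF.
- move=> k l s t e e' Hu; split; first by rewrite core_comm //; apply: pres_refl.
  by move=> x; rewrite !count_cat /= !addn0; congr (odd _); lia.
- move=> k l s ekl eks els Hu Hp; split; first by rewrite core_tetra //; apply: pres_refl.
  by move=> x; rewrite !count_cat /= !addn0; congr (odd _); lia.
Qed.

Theorem mainTheorem9 (n : nat) (i j : 'I_n) (beta beta' : seq (letter n)) :
  2 < n -> i < j ->
  all (@wf_letter n) beta -> all (@wf_letter n) beta' ->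
  Geq beta beta' ->
  @Feq n i j (wP i j beta) (wP i j beta').
Proof.
move=> _ Hij _ _; elim => [u v a b H | w | w1 w2 _ IH | w1 w2 w3 _ IH1 _ IH2].
- rewrite /wP !wP_aux_cat /=.
  have [HF HP] := rel_core u Hij H.
  rewrite (wP_aux_peq i j v HP); exact: pres_ctx.
- exact: pres_refl.
- exact: pres_sym.
- exact: pres_trans IH2.
Qed.
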